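(* Let $N$ be a positive integer, $R\in\{0,\dots,N\}$, $n\in\{1,\dots,N\}$, and let $X$ have the hypergeometric distribution $\Pr\{X=x\}=\binom Rx\binom{N-R}{n-x}/\binom Nn$ for $x\in\{0,\dots,n\}$ with $x\le R$ and $n-x\le N-R$, and $\Pr\{X=x\}=0$ for other $x\in\{0,\dots,n\}$. Let $r\in\{0,\dots,n\}$ with $R+n-N\le r\le R$, and let $\mathscr{A}=\{\vartheta\in\mathbb{Z}^+:r\le\vartheta\le R\}$, $\mathscr{B}=\{\vartheta\in\mathbb{Z}^+:R\le\vartheta\le r+N-n\}$. Then $$\Pr\{X\le r\}\le\frac{\binom Rr\binom{N-R}{n-r}}{\binom\vartheta r\binom{N-\vartheta}{n-r}}\ \text{ for }\vartheta\in\mathscr{A},\qquad \Pr\{X\ge r\}\le\frac{\binom Rr\binom{N-R}{n-r}}{\binom\vartheta r\binom{N-\vartheta}{n-r}}\ \text{ for }\vartheta\in\mathscr{B}.$$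
   Context: $\mathbb{Z}^+$ denotes the set of nonnegative integers. *)

(* Defs.v *)
From HB Require Import structures.
From mathcomp Require Import all_boot all_order all_algebra.
Set Implicit Arguments. Unset Strict Implicit. Unset Printing Implicit Defensive.
Import Order.TTheory GRing.Theory Num.Theory.
Local Open Scope ring_scope.

Definition hyp_pmf (F : realFieldType) (N R n x : nat) : F :=
  if ((x <= R) && (n - x <= N - R))%N
  then ('C(R, x) * 'C(N - R, n - x))%:R / ('C(N, n))%:R
  else 0.

Definition hyp_cdf_le (F : realFieldType) (N R n r : nat) : F :=
  \sum_(0 <= x < r.+1) hyp_pmf F N R n x.

Definition hyp_cdf_ge (F : realFieldType) (N R n r : nat) : F :=
  \sum_(r <= x < n.+1) hyp_pmf F N R n x.

Definition hyp_bound (F : realFieldType) (N R n r theta : nat) : F :=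
  ('C(R, r) * 'C(N - R, n - r))%:R / ('C(theta, r) * 'C(N - theta, n - r))%:R.

(* Main.v *)
Require Import Defs.
From HB Require Import structures.
From mathcomp Require Import all_boot all_order all_algebra.
From mathcomp Require Import ring zify.
Import Order.TTheory GRing.Theory Num.Theory.

Lemma tp2_adj m k1 k2 : (k1 <= k2)%N ->
  ('C(m, k2) * 'C(m.+1, k1) <= 'C(m, k1) * 'C(m.+1, k2))%N.
Proof.
move=> hk; have [hm|hm] := ltnP m k2; first by rewrite bin_small.
have E1 := mul_bin_down m.+1 k1; have E2 := mul_bin_down m.+1 k2.
rewrite /= in E1 E2.
have ha : (0 < m.+1 - k1)%N by lia.
have hb : (0 < m.+1 - k2)%N by lia.
rewrite -(@leq_pmul2r ((m.+1 - k1) * (m.+1 - k2))) ?muln_gt0 ?ha //.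
have -> : ('C(m, k2) * 'C(m.+1, k1) * ((m.+1 - k1) * (m.+1 - k2)) =
   (m.+1 - k2) * ('C(m, k2) * ((m.+1 - k1) * 'C(m.+1, k1))))%N by ring.
have -> : ('C(m, k1) * 'C(m.+1, k2) * ((m.+1 - k1) * (m.+1 - k2)) =
   (m.+1 - k1) * ('C(m, k1) * ((m.+1 - k2) * 'C(m.+1, k2))))%N by ring.
rewrite -E1 -E2.
have -> : ('C(m, k2) * (m.+1 * 'C(m, k1)) = 'C(m, k1) * (m.+1 * 'C(m, k2)))%N by ring.
apply: leq_mul => //; lia.
Qed.

Lemma tp2 m1 m2 k1 k2 : (m1 <= m2)%N -> (k1 <= k2)%N ->
  ('C(m1, k2) * 'C(m2, k1) <= 'C(m1, k1) * 'C(m2, k2))%N.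
Proof.
move=> /subnKC <-; move: (m2 - m1)%N => d hk.
elim: d => [|d IH]; first by rewrite addn0 mulnC.
have [hm|hm] := ltnP (m1 + d)%N k2.
  by rewrite (@bin_small m1 k2) ?mul0n //; lia.
have p1 : (0 < 'C(m1 + d, k1))%N by rewrite bin_gt0; lia.
have p2 : (0 < 'C(m1 + d, k2))%N by rewrite bin_gt0.
rewrite addnS -(@leq_pmul2r ('C(m1 + d, k1) * 'C(m1 + d, k2))) ?muln_gt0 ?p1 //.
have := leq_mul IH (@tp2_adj (m1 + d) _ _ hk) => H.
apply: (leq_trans _ (leq_trans H _)); rewrite leq_eqVlt; apply/orP; left; apply/eqP; ring.
Qed.

Lemma foo (N n th a b : nat) : (th <= N)%N -> (n <= N)%N -> (b <= n.+1)%N ->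
 (\sum_(a <= x < b) ('C(th, x) * 'C(N - th, n - x)) <= 'C(N, n))%N.
Proof.
move=> hth hn hb.
  have [hab|hab] := leqP a b; last first.
    by rewrite big_geq // ltnW.
  have E := binomial.Vandermonde th (N - th) n. rewrite subnKC // in E.
  rewrite -E -(big_mkord xpredT (fun j => 'C(th, j) * 'C(N - th, n - j))%N).
  rewrite (@big_cat_nat _ _ _ b 0 n.+1) //=.
  rewrite (@big_cat_nat _ _ _ a 0 b) //=.
  by apply: (leq_trans _ (leq_addr _ _)); exact: leq_addl.
Qed.

Lemma gen_bound (F : realFieldType) (N R n th a b K D : nat) :
  (th <= N)%N -> (n <= N)%N -> (b <= n.+1)%N -> (0 < D)%N ->
  (forall x, (a <= x < b)%N ->
     ('C(R, x) * 'C(N - R, n - x) * D <= K * ('C(th, x) * 'C(N - th, n - x)))%N) ->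
  (\sum_(a <= x < b) hyp_pmf F N R n x <= K%:R / D%:R :> F)%R.
Proof.
move=> hth hn hb hD hx.
have hC : (0 < 'C(N, n))%N by rewrite bin_gt0.
apply: (@le_trans _ _ (\sum_(a <= x < b) ('C(R, x) * 'C(N - R, n - x))%:R / ('C(N, n))%:R)%R).
  apply: ler_sum => x _; rewrite /hyp_pmf; case: ifP => _ //.
  by rewrite divr_ge0 ?ler0n.
rewrite -mulr_suml -natr_sum.
rewrite ler_pdivrMr ?ltr0n // mulrAC ler_pdivlMr ?ltr0n // -!natrM ler_nat.
set S := (\sum_(a <= x < b) _)%N.
have hT : (\sum_(a <= x < b) ('C(th, x) * 'C(N - th, n - x)) <= 'C(N, n))%N.
  exact: foo.
apply: (leq_trans _ (leq_mul (leqnn K) hT)).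
rewrite /S big_distrl big_distrr /=.
rewrite big_nat_cond [X in (_ <= X)%N]big_nat_cond.
by apply: leq_sum => x /andP[hx' _]; apply: hx.
Qed.

Local Open Scope ring_scope.

Theorem lemma6 (F : realFieldType) (N R n r : nat) :
  (0 < N)%N -> (R <= N)%N -> (1 <= n)%N -> (n <= N)%N ->
  (r <= n)%N -> (R + n <= r + N)%N -> (r <= R)%N ->
  (forall theta : nat, (r <= theta <= R)%N ->
     hyp_cdf_le F N R n r <= hyp_bound F N R n r theta) /\
  (forall theta : nat, (R <= theta <= r + N - n)%N ->
     hyp_cdf_ge F N R n r <= hyp_bound F N R n r theta).
Proof.
move=> hN hR hn1 hn hrn hRn hrR; split=> th /andP[h1 h2].
  apply: (@gen_bound F N R n th).
  - lia.
  - exact: hn.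
  - exact: hrn.
  - by rewrite muln_gt0 !bin_gt0; apply/andP; split; lia.
  move=> x /andP[_ hx].
  have T1 := @tp2 th R x r h2 hx.
  have T2 := @tp2 (N - R) (N - th) (n - r) (n - x) ltac:(lia) ltac:(lia).
  have := leq_mul T1 T2.
  set A := 'C(th, r); set B := 'C(R, x); set C := 'C(th, x); set E := 'C(R, r).
  set G := 'C(N - R, n - x); set H := 'C(N - th, n - r); set I := 'C(N - R, n - r).
  set J := 'C(N - th, n - x).
  have -> : (B * G * (A * H) = A * B * (G * H))%N by ring.
  have -> : (E * I * (C * J) = C * E * (I * J))%N by ring.
  done.
apply: (@gen_bound F N R n th).
- lia.
- exact: hn.
- by [].
- by rewrite muln_gt0 !bin_gt0; apply/andP; split; lia.
move=> x /andP[hx hx2].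
have T1 := @tp2 R th r x h1 hx.
have T2 := @tp2 (N - th) (N - R) (n - x) (n - r) ltac:(lia) ltac:(lia).
have := leq_mul T1 T2.
set A := 'C(th, r); set B := 'C(R, x); set C := 'C(th, x); set E := 'C(R, r).
set G := 'C(N - R, n - x); set H := 'C(N - th, n - r); set I := 'C(N - R, n - r).
set J := 'C(N - th, n - x).
have -> : (B * G * (A * H) = B * A * (H * G))%N by ring.
have -> : (E * I * (C * J) = E * C * (J * I))%N by ring.
done.
Qed.
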